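(* Let $G$ be the infinite king grid. The code $C=\{(x,y)\in\mathbb{Z}^2\mid |x|+|y|\equiv 0\pmod 3\}$ is solid-locating-dominating in $G$ and its density is $1/3$.
   Context: The infinite king grid $G=(V,E)$ has $V=\mathbb{Z}^2$, and distinct vertices $(u_1,u_2)$, $(v_1,v_2)$ are adjacent iff $|u_1-v_1|\le1$ and $|u_2-v_2|\le1$. Let $V_n=\{(x,y)\mid |x|\le n,|y|\le n\}$; the density of a code $C\subseteq V$ is $D(C)=\limsup_{n\to\infty}|C\cap V_n|/|V_n|$. $N[v]$ is the closed neighbourhood of $v$, and for a code $C$, $I(C;v)=N[v]\cap C$. A code $C$ is solid-locating-dominating if for all distinct $u,v\in V\setminus C$, $I(C;u)\setminus I(C;v)\ne\emptyset$. *)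

(* Defs.v *)
From Stdlib Require Import Reals ZArith List.
From Coquelicot Require Import Coquelicot.
Import ListNotations.
Open Scope Z_scope.

Definition vertex := (Z * Z)%type.

Definition king_adj (u v : vertex) : Prop :=
  u <> v /\ Z.abs (fst u - fst v) <= 1 /\ Z.abs (snd u - snd v) <= 1.

Definition closed_nbhd (v w : vertex) : Prop := w = v \/ king_adj v w.

Definition I_set (C : vertex -> Prop) (v w : vertex) : Prop :=
  closed_nbhd v w /\ C w.

Definition solid_locating_dominating (C : vertex -> Prop) : Prop :=
  forall u v : vertex, u <> v -> ~ C u -> ~ C v ->
    exists w, I_set C u w /\ ~ I_set C v w.

Definition zrange (n : nat) : list Z :=
  map (fun k => Z.of_nat k - Z.of_nat n) (seq 0 (2 * n + 1)).

Definition V_list (n : nat) : list vertex := list_prod (zrange n) (zrange n).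

Definition count_in_V (C : vertex -> bool) (n : nat) : nat :=
  length (filter C (V_list n)).

Definition density (C : vertex -> bool) : Rbar :=
  LimSup_seq (fun n => (INR (count_in_V C n) / INR (length (V_list n)))%R).

Definition code9 (p : vertex) : bool :=
  Z.eqb ((Z.abs (fst p) + Z.abs (snd p)) mod 3) 0.

(* Main.v *)
Require Import Defs.
From Stdlib Require Import Reals ZArith List Lia Lra.
From Coquelicot Require Import Coquelicot.
Import ListNotations.
Open Scope bool_scope.
Open Scope Z_scope.

Definition r (x : Z) : Z :=
  if 4 <? x then 4 + (x-4) mod 3 else if x <? -4 then -4 - ((-4-x) mod 3) else x.

Lemma r_ok x d : -3 <= d <= 3 -> Z.abs (x+d) mod 3 = Z.abs (r x + d) mod 3.
Proof. intros. unfold r. destruct (4 <? x) eqn:E1; [|destruct (x <? -4) eqn:E2];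
 rewrite ?Z.ltb_lt, ?Z.ltb_ge in *; Z.to_euclidean_division_equations; lia. Qed.

Lemma r_range x : -6 <= r x <= 6.
Proof. unfold r. destruct (4 <? x) eqn:E1; [|destruct (x <? -4) eqn:E2];
 rewrite ?Z.ltb_lt, ?Z.ltb_ge in *; Z.to_euclidean_division_equations; lia. Qed.

Lemma code_r x y dx dy : -3 <= dx <= 3 -> -3 <= dy <= 3 ->
  code9 (x+dx, y+dy) = code9 (r x + dx, r y + dy).
Proof. intros. unfold code9; simpl. rewrite (Z.add_mod (Z.abs (x+dx))), (Z.add_mod (Z.abs (r x+dx))) by lia.
 rewrite (r_ok x dx), (r_ok y dy) by lia. reflexivity. Qed.

Lemma in_zrange z n : In z (zrange n) <-> - Z.of_nat n <= z <= Z.of_nat n.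
Proof. unfold zrange. rewrite in_map_iff. split.
 - intros [k [<- Hk]]. apply in_seq in Hk. lia.
 - intros H. exists (Z.to_nat (z + Z.of_nat n)). split. lia. apply in_seq. lia. Qed.

Lemma in_box (a b : Z) n : - Z.of_nat n <= a <= Z.of_nat n -> - Z.of_nat n <= b <= Z.of_nat n ->
  In (a,b) (list_prod (zrange n) (zrange n)).
Proof. intros. apply in_prod_iff. split; apply in_zrange; auto. Qed.
Lemma box_in (a b : Z) n : In (a,b) (list_prod (zrange n) (zrange n)) ->
  - Z.of_nat n <= a <= Z.of_nat n /\ - Z.of_nat n <= b <= Z.of_nat n.
Proof. intros H. apply in_prod_iff in H. destruct H as [H1 H2]. apply in_zrange in H1, H2. auto. Qed.

Definition cheb (d e : vertex) : bool :=
  (Z.abs (fst d - fst e) <=? 1) && (Z.abs (snd d - snd e) <=? 1).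

Definition addv (u d : vertex) : vertex := (fst u + fst d, snd u + snd d).

Definition check : bool :=
  forallb (fun u =>
   forallb (fun e =>
     ((fst e =? 0) && (snd e =? 0)) || code9 u || code9 (addv u e) ||
     existsb (fun d => code9 (addv u d) && negb (cheb d e)) (list_prod (zrange 1) (zrange 1)))
   (list_prod (zrange 2) (zrange 2))) (list_prod (zrange 6) (zrange 6)).

Definition dom : bool :=
  forallb (fun u => existsb (fun d => code9 (addv u d)) (list_prod (zrange 1) (zrange 1)))
   (list_prod (zrange 6) (zrange 6)).

Lemma check_ok : check = true. Proof. vm_compute. reflexivity. Qed.
Lemma dom_ok : dom = true. Proof. vm_compute. reflexivity. Qed.

Lemma cn_iff v w : closed_nbhd v w <-> Z.abs (fst v - fst w) <= 1 /\ Z.abs (snd v - snd w) <= 1.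
Proof. unfold closed_nbhd, king_adj. destruct v as [a b], w as [c d]; simpl. split.
 - intros [H|H]. inversion H; subst; lia. lia.
 - intros H. destruct (Z.eq_dec a c); destruct (Z.eq_dec b d); subst; [left; reflexivity| right; split; [congruence|lia] ..]. Qed.

Lemma sld : solid_locating_dominating (fun p => code9 p = true).
Proof.
  intros [ux uy] [vx vy] Huv Hu Hv.
  assert (Hr : code9 (ux,uy) = code9 (r ux + 0, r uy + 0)).
  { rewrite <- code_r by lia. rewrite !Z.add_0_r. reflexivity. }
  destruct (Z_le_dec (Z.abs (vx-ux)) 2) as [H1|H1];
  [destruct (Z_le_dec (Z.abs (vy-uy)) 2) as [H2|H2]|].
  - pose proof check_ok as C. unfold check in C. rewrite forallb_forall in C.
    pose proof (r_range ux); pose proof (r_range uy).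
    specialize (C (r ux, r uy) (in_box (r ux) (r uy) 6 ltac:(simpl; lia) ltac:(simpl; lia))). rewrite forallb_forall in C.
    specialize (C (vx-ux, vy-uy) (in_box (vx-ux) (vy-uy) 2 ltac:(simpl; lia) ltac:(simpl; lia))).
    rewrite !Bool.orb_true_iff in C. destruct C as [[[C|C]|C]|C].
    + simpl in C. rewrite Bool.andb_true_iff, !Z.eqb_eq in C. exfalso; apply Huv; f_equal; lia.
    + exfalso. apply Hu. rewrite Hr. rewrite !Z.add_0_r. exact C.
    + exfalso. apply Hv. unfold addv in C; simpl in C.
      replace vx with (ux + (vx-ux)) by lia. replace vy with (uy + (vy-uy)) by lia.
      rewrite code_r by lia. exact C.
    + apply existsb_exists in C. destruct C as [[dx dy] [Hin Hd]].
      apply box_in in Hin. simpl in Hin.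
      rewrite Bool.andb_true_iff, Bool.negb_true_iff in Hd. destruct Hd as [Hd1 Hd2].
      unfold addv in Hd1; simpl in Hd1. rewrite <- code_r in Hd1 by lia.
      exists (ux+dx, uy+dy). split.
      * split; [apply cn_iff; simpl; lia | exact Hd1].
      * intros [Hc _]. apply cn_iff in Hc. simpl in Hc. unfold cheb in Hd2. simpl in Hd2.
        rewrite Bool.andb_false_iff, !Z.leb_gt in Hd2. lia.
  - pose proof dom_ok as C. unfold dom in C. rewrite forallb_forall in C.
    pose proof (r_range ux); pose proof (r_range uy).
    specialize (C (r ux, r uy) (in_box (r ux) (r uy) 6 ltac:(simpl; lia) ltac:(simpl; lia))).
    apply existsb_exists in C. destruct C as [[dx dy] [Hin Hd1]].
    apply box_in in Hin. simpl in Hin.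
    unfold addv in Hd1; simpl in Hd1. rewrite <- code_r in Hd1 by lia.
    exists (ux+dx, uy+dy). split.
    * split; [apply cn_iff; simpl; lia | exact Hd1].
    * intros [Hc _]. apply cn_iff in Hc. simpl in Hc. lia.
  - pose proof dom_ok as C. unfold dom in C. rewrite forallb_forall in C.
    pose proof (r_range ux); pose proof (r_range uy).
    specialize (C (r ux, r uy) (in_box (r ux) (r uy) 6 ltac:(simpl; lia) ltac:(simpl; lia))).
    apply existsb_exists in C. destruct C as [[dx dy] [Hin Hd1]].
    apply box_in in Hin. simpl in Hin.
    unfold addv in Hd1; simpl in Hd1. rewrite <- code_r in Hd1 by lia.
    exists (ux+dx, uy+dy). split.
    * split; [apply cn_iff; simpl; lia | exact Hd1].
    * intros [Hc _]. apply cn_iff in Hc. simpl in Hc. lia.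
Qed.
Lemma zrange_S n : zrange (S n) = (-(Z.of_nat n +1)) :: zrange n ++ [Z.of_nat n + 1].
Proof.
  unfold zrange. replace (2 * S n + 1)%nat with (S (S (2*n+1))) by lia.
  remember (Z.of_nat (S n)) as N eqn:HN. rewrite Nat2Z.inj_succ in HN.
  rewrite <- cons_seq, seq_S. cbn [map app]. f_equal. lia.
  rewrite map_app. cbn [map]. f_equal.
  - rewrite <- seq_shift, map_map. apply map_ext. intros. rewrite Nat2Z.inj_succ. lia.
  - f_equal. lia.
Qed.

Definition f (x : Z) (n : nat) : nat := length (filter (fun y => code9 (x,y)) (zrange n)).
Definition b (x k : Z) : nat := if code9 (x,k) then 1%nat else 0%nat.

Lemma f_S x n : f x (S n) = (f x n + 2 * b x (Z.of_nat n + 1))%nat.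
Proof.
  unfold f, b. rewrite zrange_S. simpl filter.
  assert (E : code9 (x, - (Z.of_nat n + 1)) = code9 (x, Z.of_nat n + 1)).
  { unfold code9; simpl. rewrite Z.abs_opp. reflexivity. }
  rewrite E. rewrite filter_app. simpl filter. destruct (code9 (x, Z.of_nat n + 1)); cbn [length]; rewrite length_app; cbn [length]; lia.
Qed.

Lemma b3 x k : 0 <= k -> (b x (k+1) + b x (k+2) + b x (k+3) >= 1)%nat /\ (b x (k+1) + b x (k+2) + b x (k+3) <= 1)%nat.
Proof. intros Hk. unfold b, code9; simpl.
  destruct (Z.eqb_spec ((Z.abs x + Z.abs (k+1)) mod 3) 0);
  destruct (Z.eqb_spec ((Z.abs x + Z.abs (k+2)) mod 3) 0);
  destruct (Z.eqb_spec ((Z.abs x + Z.abs (k+3)) mod 3) 0);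
  Z.to_euclidean_division_equations; lia. Qed.

Lemma f_bound x n : 2 * Z.of_nat n - 4 <= 3 * Z.of_nat (f x n) <= 2 * Z.of_nat n + 15.
Proof.
  induction n as [n IH] using lt_wf_ind.
  destruct (Nat.lt_ge_cases n 3).
  - assert (E0 : f x 0 = b x 0) by (unfold f, b; simpl; destruct (code9 (x,0%Z)); reflexivity).
    pose proof (f_S x 0) as E1. pose proof (f_S x 1) as E2.
    unfold b in *.
    destruct (code9 (x,0%Z)), (code9 (x, (Z.of_nat 0 + 1)%Z)), (code9 (x, (Z.of_nat 1 + 1)%Z));
    destruct n as [|[|[|n]]]; lia.
  - destruct n as [|[|[|n]]]; try lia.
    specialize (IH n ltac:(lia)).
    rewrite !f_S. pose proof (b3 x (Z.of_nat n) ltac:(lia)).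
    replace (Z.of_nat (S (S n)) + 1) with (Z.of_nat n + 3) by lia.
    replace (Z.of_nat (S n) + 1) with (Z.of_nat n + 2) by lia.
    lia.
Qed.

Lemma len_filter_map (C : vertex -> bool) x (l : list Z) :
  length (filter C (map (fun y => (x,y)) l)) = length (filter (fun y => C (x,y)) l).
Proof. induction l; simpl; auto. destruct (C (x,a)); simpl; auto. Qed.

Lemma len_filter_prod (C : vertex -> bool) (l1 l2 : list Z) :
  length (filter C (list_prod l1 l2)) =
  fold_right (fun x acc => length (filter (fun y => C (x,y)) l2) + acc)%nat 0%nat l1.
Proof. induction l1; cbn [list_prod fold_right]; auto. rewrite filter_app, length_app. f_equal; [apply len_filter_map | exact IHl1]. Qed.

Lemma sum_bound n (l : list Z) :
  Z.of_nat (length l) * (2 * Z.of_nat n - 4) <=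
  3 * Z.of_nat (fold_right (fun x acc => f x n + acc)%nat 0%nat l) <=
  Z.of_nat (length l) * (2 * Z.of_nat n + 15).
Proof. induction l; cbn [length fold_right]. lia. pose proof (f_bound a n). rewrite Nat2Z.inj_succ, Nat2Z.inj_add. lia. Qed.

Lemma len_zrange n : length (zrange n) = (2 * n + 1)%nat.
Proof. unfold zrange. rewrite length_map, length_seq. reflexivity. Qed.

Lemma count_bound n :
  let m := Z.of_nat (2 * n + 1) in
  -5 * m <= 3 * Z.of_nat (count_in_V code9 n) - m * m <= 14 * m.
Proof.
  intros m.
  assert (E : count_in_V code9 n = fold_right (fun x acc => length (filter (fun y => code9 (x,y)) (zrange n)) + acc)%nat 0%nat (zrange n))
    by apply len_filter_prod.
  rewrite E.
  pose proof (sum_bound n (zrange n)) as H. rewrite len_zrange in H.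
  unfold f in H. subst m. lia.
Qed.

Lemma len_V n : length (V_list n) = ((2 * n + 1) * (2 * n + 1))%nat.
Proof. unfold V_list. transitivity (length (zrange n) * length (zrange n))%nat. apply length_prod. rewrite len_zrange. reflexivity. Qed.

Open Scope R_scope.

Lemma real_bound n :
  Rabs (INR (count_in_V code9 n) / INR (length (V_list n)) - 1/3) <= 5 / INR (2*n+1).
Proof.
  pose proof (count_bound n) as H. cbv zeta in H.
  rewrite len_V, mult_INR.
  set (m := (2*n+1)%nat) in *. set (c := count_in_V code9 n) in *.
  assert (HM : 0 < INR m) by (apply lt_0_INR; unfold m; lia).
  destruct H as [H1 H2]. apply IZR_le in H1, H2.
  rewrite ?mult_IZR, ?minus_IZR, ?mult_IZR, <- !INR_IZR_INZ in H1, H2.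
  set (M := INR m) in *. set (C := INR c) in *.
  replace (C / (M*M) - 1/3) with ((3*C - M*M) / (3*M*M)) by (field; lra).
  replace (5 / M) with ((15 * M) / (3*M*M)) by (field; lra).
  assert (HD : 0 < 3*M*M) by (apply Rmult_lt_0_compat; lra).
  unfold Rdiv. rewrite Rabs_mult, (Rabs_pos_eq (/ _)) by (left; apply Rinv_0_lt_compat; lra).
  apply Rmult_le_compat_r. left; apply Rinv_0_lt_compat; lra.
  apply Rabs_le. lra.
Qed.

Lemma dens : density code9 = Finite (1/3).
Proof.
  unfold density. apply is_LimSup_seq_unique, is_lim_LimSup_seq.
  apply is_lim_seq_spec. intros eps.
  destruct (archimed (5 / eps)) as [Ha _].
  exists (Z.to_nat (up (5/eps))). intros n Hn.
  eapply Rle_lt_trans. apply real_bound.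
  assert (Hpos : 0 < eps) by apply cond_pos.
  assert (Hn' : 5 / eps < INR (2*n+1)).
  { eapply Rlt_le_trans. exact Ha.
    assert (IZR (up (5/eps)) <= INR n).
    { destruct (Z_le_dec 0 (up (5/eps))).
      - rewrite <- (Z2Nat.id (up (5/eps))) by lia. rewrite <- INR_IZR_INZ. apply le_INR. exact Hn.
      - apply Rle_trans with 0. apply IZR_le; lia. apply pos_INR. }
    rewrite plus_INR, mult_INR. simpl. pose proof (pos_INR n). lra. }
  assert (HM : 0 < INR (2*n+1)) by (apply lt_0_INR; lia).
  apply Rlt_div_l; [exact HM|].
  replace 5 with ((5/eps)*eps) at 1 by (field; lra).
  rewrite (Rmult_comm eps). apply Rmult_lt_compat_r; lra.
Qed.

Theorem theorem9 :
  solid_locating_dominating (fun p => code9 p = true) /\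
  density code9 = Finite (1 / 3)%R.
Proof. split. exact sld. exact dens. Qed.
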